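(* Let $\mathcal D=(C_1,C_2,C_3,C_4)$ be any ordered, oriented Descartes configuration and let $\mathbf D=\tfrac12\begin{pmatrix}-1&1&1&1\\1&-1&1&1\\1&1&-1&1\\1&1&1&-1\end{pmatrix}$. Then $\mathbf D\in\mathrm{Aut}(Q_D)$, and $\mathbf D\mathbf W_{\mathcal D}=\mathbf W_{\mathcal D^\perp}$ for an ordered, oriented Descartes configuration $\mathcal D^\perp=(C_1^\perp,\dots,C_4^\perp)$ in which, for each $i$, the circle $C_i^\perp$ is (as an unoriented circle or line) the circle through the three tangency points of $\mathcal D$ that do not lie on $C_i$. The configuration $\mathcal D^\perp$ has the same six tangency points as $\mathcal D$, and its circles meet those of $\mathcal D$ orthogonally at these points.
   Context: Oriented circles: radius $r$, oriented curvature $\pm1/r$, $+$ iff the interior is the bounded open disk; oriented lines have curvature $0$, unit normal $\mathbf h$, interior the open half-plane into which $\mathbf h$ points. A Descartes configuration: four mutually tangent circles/lines with six distinct tangency points (parallel lines tangent at $\infty$); oriented if the four interiors are pairwise disjoint or become so after reversing all orientations. Augmented curvature-center coordinates: for center $\mathbf c$ and oriented radius $r$, $\mathbf w(C)=((|\mathbf c|^2-r^2)/r,1/r,c_1/r,c_2/r)$; for the line $\mathbf x\cdot\mathbf h=m$ with interior-pointing unit normal $\mathbf h$, $\mathbf w(C)=(2m,0,h_1,h_2)$. $\mathbf W_{\mathcal D}$ has $k$-th row $\mathbf w(C_k)$. $\mathbf Q_D=\mathbf I-\frac12\mathbf 1\mathbf 1^T$ and $\mathrm{Aut}(Q_D)=\{\mathbf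 U:\mathbf U^T\mathbf Q_D\mathbf U=\mathbf Q_D\}$. *)

(* Defs.v *)
From HB Require Import structures.
From mathcomp Require Import all_boot all_order all_algebra.
From mathcomp Require Import reals.
Set Implicit Arguments. Unset Strict Implicit. Unset Printing Implicit Defensive.
Import Order.TTheory GRing.Theory Num.Theory.
Local Open Scope ring_scope.

Section Descartes.
Variable R : realType.

Definition pt := (R * R)%type.
Definition dot (x y : pt) : R := x.1 * y.1 + x.2 * y.2.
Definition sub (x y : pt) : pt := (x.1 - y.1, x.2 - y.2).

(* OCirc c r : center c, oriented (signed) radius r (r <> 0);
               r > 0 iff the interior is the bounded open disk.
   OLine h m : the line x.h = m with unit normal h; the interior is the
               open half-plane {x | x.h > m} into which h points. *)
Inductive ocircle :=
| OCirc of pt & R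
| OLine of pt & R.

Definition valid (C : ocircle) : Prop :=
  match C with
  | OCirc _ r => r <> 0
  | OLine h _ => dot h h = 1
  end.

(* Points of the extended plane: Some x finite, None = the point at infinity. *)
Definition ept := option pt.

Definition on (C : ocircle) (p : ept) : Prop :=
  match C, p with
  | OCirc c r, Some x => dot (sub x c) (sub x c) = r ^+ 2
  | OCirc _ _, None => False
  | OLine h m, Some x => dot x h = m
  | OLine _ _, None => True
  end.

Definition interior (C : ocircle) (x : pt) : Prop :=
  match C with
  | OCirc c r => if 0 < r then dot (sub x c) (sub x c) < r ^+ 2
                 else r ^+ 2 < dot (sub x c) (sub x c)
  | OLine h m => m < dot x h
  end.

Definition reverse (C : ocircle) : ocircle :=
  match C with
  | OCirc c r => OCirc c (- r)
  | OLine h m => OLine (- h.1, - h.2) (- m)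
  end.

(* C and C' are tangent at p : they meet (in the extended plane) exactly at p.
   (Parallel distinct lines are tangent at infinity.) *)
Definition tangent_at (C C' : ocircle) (p : ept) : Prop :=
  forall q : ept, (on C q /\ on C' q) <-> q = p.

Definition config := 'I_4 -> ocircle.

(* Descartes configuration: four mutually tangent circles/lines with six
   distinct tangency points. *)
Definition descartes (D : config) : Prop :=
  (forall i, valid (D i)) /\
  (forall i j : 'I_4, i != j -> exists p, tangent_at (D i) (D j) p) /\
  (forall (i j k l : 'I_4) p, i != j -> k != l ->
     tangent_at (D i) (D j) p -> tangent_at (D k) (D l) p ->
     (i == k) && (j == l) || (i == l) && (j == k)).

Definition interiors_disjoint (D : config) : Prop :=
  forall i j : 'I_4, i != j -> forall x, ~ (interior (D i) x /\ interior (D j) x).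

Definition oriented_descartes (D : config) : Prop :=
  descartes D /\
  (interiors_disjoint D \/ interiors_disjoint (fun i => reverse (D i))).

Definition wvec (C : ocircle) : 'rV[R]_4 :=
  match C with
  | OCirc c r => \row_(k < 4)
      [:: (dot c c - r ^+ 2) / r; 1 / r; c.1 / r; c.2 / r]`_k
  | OLine h m => \row_(k < 4) [:: 2 * m; 0; h.1; h.2]`_k
  end.

Definition Wmx (D : config) : 'M[R]_4 := \matrix_(k < 4, l < 4) wvec (D k) 0 l.

Definition QD : 'M[R]_4 := 1%:M - (1 / 2) *: const_mx 1.

Definition AutQD (U : 'M[R]_4) : Prop := U^T *m QD *m U = QD.

Definition Dmx : 'M[R]_4 :=
  \matrix_(i < 4, j < 4) (if i == j then - (1 / 2) else 1 / 2).

(* A normal vector of C at the finite point x (meaningful when x is on C). *)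
Definition normal (C : ocircle) (x : pt) : pt :=
  match C with
  | OCirc c _ => sub x c
  | OLine h _ => h
  end.

Definition pt_of (p : ept) : pt := match p with Some x => x | None => (0, 0) end.

(* C and C' meet orthogonally at p (at infinity both are lines, and the
   angle is that between their normals). *)
Definition ortho_at (C C' : ocircle) (p : ept) : Prop :=
  on C p /\ on C' p /\ dot (normal C (pt_of p)) (normal C' (pt_of p)) = 0.

Definition tangency_point (D : config) (p : ept) : Prop :=
  exists i j : 'I_4, i != j /\ tangent_at (D i) (D j) p.

End Descartes.

(* Main.v *)
Require Import Defs.
From HB Require Import structures.
From mathcomp Require Import all_boot all_order all_algebra.
From mathcomp Require Import reals.
From mathcomp Require Import ring lra.
Set Implicit Arguments. Unset Strict Implicit. Unset Printing Implicit Defensive.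
Import Order.TTheory GRing.Theory Num.Theory.
Local Open Scope ring_scope.

Definition o0 : 'I_4 := @Ordinal 4 0 isT.
Definition o1 : 'I_4 := @Ordinal 4 1 isT.
Definition o2 : 'I_4 := @Ordinal 4 2 isT.
Definition o3 : 'I_4 := @Ordinal 4 3 isT.

Lemma ord4 (i : 'I_4) : i = o0 \/ i = o1 \/ i = o2 \/ i = o3.
Proof.
case: i => [[|[|[|[|n]]]] Hn].
- by left; apply: val_inj.
- by right; left; apply: val_inj.
- by right; right; left; apply: val_inj.
- by right; right; right; apply: val_inj.
- by [].
Qed.

Lemma sum4 (R : nmodType) (F : 'I_4 -> R) :
  \sum_(j < 4) F j = F o0 + F o1 + F o2 + F o3.
Proof.
rewrite !big_ord_recr big_ord0 /= add0r.
by congr (_ + _ + _ + _); congr F; apply: val_inj.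
Qed.

Lemma test : (o0 == o1) = false.
Proof. by []. Qed.

Definition wa (R : realType) (w : 'rV[R]_4) := w 0 o0.
Definition wb (R : realType) (w : 'rV[R]_4) := w 0 o1.
Definition wx (R : realType) (w : 'rV[R]_4) := w 0 o2.
Definition wy (R : realType) (w : 'rV[R]_4) := w 0 o3.

Definition B (R : realType) (w w' : 'rV[R]_4) : R :=
  wx w * wx w' + wy w * wy w' - (wa w * wb w' + wb w * wa w') / 2.

Definition phi (R : realType) (w : 'rV[R]_4) (p : ept R) : R :=
  match p with
  | Some x => wa w + wb w * dot x x - 2 * (x.1 * wx w + x.2 * wy w)
  | None => wb w
  end.

Lemma wvecE (R : realType) (C : ocircle R) :
  wa (wvec C) = match C with OCirc c r => (dot c c - r ^+ 2) / r | OLine h m => 2 * m end /\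
  wb (wvec C) = match C with OCirc c r => 1 / r | OLine h m => 0 end /\
  wx (wvec C) = match C with OCirc c r => c.1 / r | OLine h m => h.1 end /\
  wy (wvec C) = match C with OCirc c r => c.2 / r | OLine h m => h.2 end.
Proof. by case: C => [c r|h m]; rewrite /wa /wb /wx /wy !mxE. Qed.

Lemma phi_circ (R : realType) (c : pt R) r x : r != 0 ->
  phi (wvec (OCirc c r)) (Some x) = (dot (sub x c) (sub x c) - r ^+ 2) / r.
Proof.
move=> r0; rewrite /phi; have [-> [-> [-> ->]]] := wvecE (OCirc c r).
rewrite /dot /sub /=; field; exact: r0.
Qed.

Lemma phi_line (R : realType) (h : pt R) m x :
  phi (wvec (OLine h m)) (Some x) = 2 * (m - dot x h).
Proof.
rewrite /phi; have [-> [-> [-> ->]]] := wvecE (OLine h m).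
rewrite /dot /=; ring.
Qed.

Lemma on_phi (R : realType) (C : ocircle R) p : valid C ->
  (on C p <-> phi (wvec C) p = 0).
Proof.
case: C => [c r|h m] V; case: p => [x|]; rewrite [on _ _]/= [valid _]/= in V *.
- have r0 : r != 0 by apply/eqP.
  rewrite phi_circ //; split => [->|H]; first by rewrite subrr mul0r.
  move/eqP: H; rewrite mulf_eq0 invr_eq0 (negbTE r0) orbF subr_eq0.
  by move/eqP.
- rewrite /phi; have [_ [-> _]] := wvecE (OCirc c r); split => // H.
  by apply: V; move: H => /eqP; rewrite mul1r invr_eq0 => /eqP.
- rewrite phi_line; split => [->|/eqP]; first by rewrite subrr mulr0.
  by rewrite mulf_eq0 pnatr_eq0 /= subr_eq0 eq_sym => /eqP.
- by rewrite /phi; have [_ [-> _]] := wvecE (OLine h m).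
Qed.

Lemma int_phi (R : realType) (C : ocircle R) x : valid C ->
  (interior C x <-> phi (wvec C) (Some x) < 0).
Proof.
case: C => [c r|h m] V; rewrite [interior _ _]/= [valid _]/= in V *.
- have r0 : r != 0 by apply/eqP.
  rewrite phi_circ //.
  set Q := dot _ _.
  have E : (Q - r ^+ 2) / r = (Q - r ^+ 2) * r / (r ^+ 2) by field.
  have r2 : 0 < r ^+ 2 by rewrite exprn_even_gt0.
  rewrite E pmulr_llt0 ?invr_gt0 //.
  case: ifP => H.
  + by rewrite pmulr_llt0 // subr_lt0.
  + have Hr : r < 0 by rewrite lt_neqAle r0 /= leNgt H.
    by rewrite nmulr_llt0 // subr_gt0.
- rewrite phi_line; split => H; first by nra.
  by nra.
Qed.

Lemma phi_rev (R : realType) (C : ocircle R) p :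
  phi (wvec (reverse C)) p = - phi (wvec C) p.
Proof.
rewrite /phi; case: C => [c r|h m] /=.
- have [-> [-> [-> ->]]] := wvecE (OCirc c (-r)).
  have [-> [-> [-> ->]]] := wvecE (OCirc c r).
  case: p => [x|] /=; rewrite ?invrN; rewrite /dot; ring.
- have [-> [-> [-> ->]]] := wvecE (OLine (- h.1, - h.2) (- m)).
  have [-> [-> [-> ->]]] := wvecE (OLine h m).
  case: p => [x|] /=; ring.
Qed.

Lemma valid_rev (R : realType) (C : ocircle R) : valid C -> valid (reverse C).
Proof.
case: C => [c r|h m] /= V.
- by move/eqP: V => V; apply/eqP; rewrite oppr_eq0.
- by rewrite -V /dot /=; ring.
Qed.

Lemma B_self (R : realType) (C : ocircle R) : valid C -> B (wvec C) (wvec C) = 1.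
Proof.
rewrite /B; have [-> [-> [-> ->]]] := wvecE C.
case: C => [c r|h m] /= V.
- rewrite /dot; field; exact/eqP.
- by move: V; rewrite /dot => V; rewrite -V; ring.
Qed.

Lemma B_sym (R : realType) (w w' : 'rV[R]_4) : B w w' = B w' w.
Proof. rewrite /B; ring. Qed.

Lemma tangent_sym (R : realType) (C C' : ocircle R) p :
  tangent_at C C' p -> tangent_at C' C p.
Proof. by move=> H q; rewrite -(H q); split => -[]. Qed.

Lemma T_cc (R : realType) (c c' : pt R) r r' p :
  r != 0 -> r' != 0 -> tangent_at (OCirc c r) (OCirc c' r') p ->
  B (wvec (OCirc c r)) (wvec (OCirc c' r')) ^+ 2 = 1.
Proof.
move=> r0 r0' Ht.
have [H1 H2] := (Ht p).2 erefl; case: p Ht H1 H2 => [x|] //= Ht hx hx'.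
have EB : B (wvec (OCirc c r)) (wvec (OCirc c' r')) =
   (r ^+ 2 + r' ^+ 2 - dot (sub c c') (sub c c')) / (2 * r * r').
  rewrite /B; have [-> [-> [-> ->]]] := wvecE (OCirc c r).
  have [-> [-> [-> ->]]] := wvecE (OCirc c' r').
  rewrite /dot /sub /=; field; by rewrite r0 r0'.
set u1 := c'.1 - c.1; set u2 := c'.2 - c.2.
set d := u1 ^+ 2 + u2 ^+ 2.
have Ed : dot (sub c c') (sub c c') = d by rewrite /dot /sub /d /u1 /u2 /=; ring.
have [d0|dn0] := eqVneq d 0.
- have u10 : u1 = 0 by move: d0; rewrite /d => d0; nra.
  have u20 : u2 = 0 by move: d0; rewrite /d => d0; nra.
  pose q : pt R := (2 * c.1 - x.1, 2 * c.2 - x.2).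
  have Hq : Some q = Some x.
    apply/(Ht (Some q)); split => /=.
    + by rewrite -hx /dot /sub /=; ring.
    + rewrite -hx' /dot /sub /=.
      have -> : c'.1 = c.1 by move: u10; rewrite /u1 => /eqP; rewrite subr_eq0 => /eqP.
      have -> : c'.2 = c.2 by move: u20; rewrite /u2 => /eqP; rewrite subr_eq0 => /eqP.
      ring.
  have e1 : q.1 = x.1 by case: Hq => ->.
  have e2 : q.2 = x.2 by case: Hq => ->.
  rewrite /q /= in e1 e2.
  have : r ^+ 2 = 0.
    rewrite -hx /dot /sub /=.
    have -> : x.1 - c.1 = 0 by lra.
    have -> : x.2 - c.2 = 0 by lra.
    ring.
  by move/eqP; rewrite expf_eq0 /= (negbTE r0).
- pose t := ((x.1 - c.1) * u1 + (x.2 - c.2) * u2) / d.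
  pose q : pt R := (c.1 + 2 * t * u1 - (x.1 - c.1), c.2 + 2 * t * u2 - (x.2 - c.2)).
  have Hq : Some q = Some x.
    apply/(Ht (Some q)); split => /=.
    + rewrite -hx /dot /sub /q /t /d /=; field; exact: dn0.
    + rewrite -hx' /dot /sub /q /t /=.
      have -> : c'.1 = c.1 + u1 by rewrite /u1; ring.
      have -> : c'.2 = c.2 + u2 by rewrite /u2; ring.
      rewrite -/u1 -/u2 /d; field; exact: dn0.
  have e1 : q.1 = x.1 by case: Hq => ->.
  have e2 : q.2 = x.2 by case: Hq => ->.
  rewrite /q /= in e1 e2.
  have z1 : x.1 - c.1 = t * u1 by lra.
  have z2 : x.2 - c.2 = t * u2 by lra.
  have hr : r ^+ 2 = t ^+ 2 * d by rewrite -hx /dot /sub /= z1 z2 /d; ring.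
  have hr' : r' ^+ 2 = (t - 1) ^+ 2 * d.
    rewrite -hx' /dot /sub /=.
    have -> : x.1 - c'.1 = (x.1 - c.1) - u1 by rewrite /u1; ring.
    have -> : x.2 - c'.2 = (x.2 - c.2) - u2 by rewrite /u2; ring.
    rewrite z1 z2 /d; ring.
  rewrite EB Ed; apply/eqP; rewrite -subr_eq0.
  have -> : ((r ^+ 2 + r' ^+ 2 - d) / (2 * r * r')) ^+ 2 - 1 =
     ((r ^+ 2 + r' ^+ 2 - d) ^+ 2 - 4 * r ^+ 2 * r' ^+ 2) / (4 * r ^+ 2 * r' ^+ 2).
    by field; rewrite r0 r0'.
  rewrite hr hr'.
  have -> : (t ^+ 2 * d + (t - 1) ^+ 2 * d - d) ^+ 2 - 4 * (t ^+ 2 * d) * ((t - 1) ^+ 2 * d) = 0 by ring.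
  by rewrite mul0r.
Qed.

Lemma T_cl (R : realType) (c : pt R) r (h : pt R) m p :
  r != 0 -> dot h h = 1 -> tangent_at (OCirc c r) (OLine h m) p ->
  B (wvec (OCirc c r)) (wvec (OLine h m)) ^+ 2 = 1.
Proof.
move=> r0 hh Ht.
have [H1 H2] := (Ht p).2 erefl; case: p Ht H1 H2 => [x|] //= Ht hx hl.
have EB : B (wvec (OCirc c r)) (wvec (OLine h m)) = (dot c h - m) / r.
  rewrite /B; have [-> [-> [-> ->]]] := wvecE (OCirc c r).
  have [-> [-> [-> ->]]] := wvecE (OLine h m).
  rewrite /dot /=; field; exact: r0.
pose s := (x.1 - c.1) * (- h.2) + (x.2 - c.2) * h.1.
pose q : pt R := (x.1 - 2 * s * (- h.2), x.2 - 2 * s * h.1).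
have Hq : Some q = Some x.
  apply/(Ht (Some q)); split => /=.
  + rewrite -hx.
    have E : dot (sub q c) (sub q c) - dot (sub x c) (sub x c) = 4 * s ^+ 2 * (dot h h - 1).
      by rewrite /dot /sub /q /s /=; ring.
    by move: E; rewrite hh subrr mulr0 => /eqP; rewrite subr_eq0 => /eqP.
  + by rewrite -hl /dot /q /s /=; ring.
have e1 : q.1 = x.1 by case: Hq => ->.
have e2 : q.2 = x.2 by case: Hq => ->.
rewrite /q /= in e1 e2.
have s0 : s = 0.
  have -> : s = s * dot h h by rewrite hh mulr1.
  have a1 : s * h.2 = 0 by lra.
  have a2 : s * h.1 = 0 by lra.
  rewrite /dot /=.
  have -> : s * (h.1 * h.1 + h.2 * h.2) = (s * h.1) * h.1 + (s * h.2) * h.2 by ring.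
  by rewrite a1 a2 !mul0r addr0.
rewrite EB; apply/eqP; rewrite -subr_eq0.
have -> : ((dot c h - m) / r) ^+ 2 - 1 = ((dot c h - m) ^+ 2 - r ^+ 2) / r ^+ 2.
  by field; rewrite r0.
rewrite -hx -hl.
have -> : (dot c h - dot x h) ^+ 2 - dot (sub x c) (sub x c) =
  (dot c h - dot x h) ^+ 2 - dot (sub x c) (sub x c) * dot h h by rewrite hh mulr1.
have -> : (dot c h - dot x h) ^+ 2 - dot (sub x c) (sub x c) * dot h h = - s ^+ 2.
  by rewrite /s /dot /sub /=; ring.
by rewrite s0 expr0n /= oppr0 mul0r.
Qed.

Lemma T_ll (R : realType) (h : pt R) m (h' : pt R) m' p :
  dot h h = 1 -> dot h' h' = 1 -> tangent_at (OLine h m) (OLine h' m') p ->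
  B (wvec (OLine h m)) (wvec (OLine h' m')) ^+ 2 = 1.
Proof.
move=> hh hh' Ht.
have EB : B (wvec (OLine h m)) (wvec (OLine h' m')) = dot h h'.
  rewrite /B; have [-> [-> [-> ->]]] := wvecE (OLine h m).
  have [-> [-> [-> ->]]] := wvecE (OLine h' m').
  rewrite /dot /=; ring.
pose del := h.1 * h'.2 - h.2 * h'.1.
have d0 : del = 0.
  apply/eqP; apply/negP => dn0.
  pose x : pt R := ((m * h'.2 - m' * h.2) / del, (h.1 * m' - h'.1 * m) / del).
  have Hx : Some x = p.
    apply/(Ht (Some x)); split => /=; rewrite /dot /x /del /=; field; apply/negP; exact: dn0.
  have Hn : (None : ept R) = p by apply/(Ht None).
  by rewrite -Hn in Hx.
rewrite EB.
have -> : dot h h' ^+ 2 = dot h h * dot h' h' - del ^+ 2 by rewrite /dot /del; ring.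
by rewrite d0 hh hh' mulr1 expr0n /= subr0.
Qed.

Lemma T_all (R : realType) (C C' : ocircle R) p :
  valid C -> valid C' -> tangent_at C C' p -> B (wvec C) (wvec C') ^+ 2 = 1.
Proof.
case: C => [c r|h m]; case: C' => [c' r'|h' m'] /= V V' Ht.
- by apply: T_cc Ht; apply/eqP.
- by apply: T_cl Ht; first apply/eqP.
- by rewrite B_sym; apply: T_cl (tangent_sym Ht); first apply/eqP.
- exact: T_ll Ht.
Qed.

Lemma int_nonempty (R : realType) (w : 'rV[R]_4) :
  B w w = 1 -> exists x, phi w (Some x) < 0.
Proof.
rewrite /B /phi /dot => H.
set a := wa w in H *; set b := wb w in H *; set X := wx w in H *; set Y := wy w in H *.
have [bp|bn|b0] := ltgtP b 0.
- exists ((X + 2) / b, Y / b) => /=.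
  have -> : a + b * ((X + 2) / b * ((X + 2) / b) + Y / b * (Y / b)) -
     2 * ((X + 2) / b * X + Y / b * Y) = (a * b + 4 - (X * X + Y * Y)) / b.
    by field; rewrite lt_eqF.
  have -> : a * b + 4 - (X * X + Y * Y) = 3 by lra.
  by rewrite pmulr_rlt0 ?invr_lt0.
- exists (X / b, Y / b) => /=.
  have -> : a + b * (X / b * (X / b) + Y / b * (Y / b)) -
     2 * (X / b * X + Y / b * Y) = (a * b - (X * X + Y * Y)) / b.
    by field; rewrite gt_eqF.
  have -> : a * b - (X * X + Y * Y) = -1 by lra.
  by rewrite mulN1r oppr_lt0 invr_gt0.
- exists ((a / 2 + 1) * X, (a / 2 + 1) * Y) => /=.
  rewrite b0 in H *.
  have E : X * X + Y * Y = 1 by lra.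
  have E2 : a * (X * X + Y * Y) = a by rewrite E mulr1.
  nra.
Qed.

Lemma S_lemma (R : realType) (u w : 'rV[R]_4) :
  B u u = 1 -> B w w = 1 -> B u w = 1 ->
  exists x, phi u (Some x) < 0 /\ phi w (Some x) < 0.
Proof.
move=> Hu Hw Huw.
pose na := wa u - wa w; pose nb := wb u - wb w.
pose n1 := wx u - wx w; pose n2 := wy u - wy w.
have null : n1 * n1 + n2 * n2 - na * nb = 0.
  have -> : n1 * n1 + n2 * n2 - na * nb = B u u + B w w - 2 * B u w.
    by rewrite /B /na /nb /n1 /n2; field.
  by rewrite Hu Hw Huw; ring.
have Eg : forall x, phi u (Some x) - phi w (Some x) =
   na + nb * dot x x - 2 * (x.1 * n1 + x.2 * n2).
  by move=> x; rewrite /phi /na /nb /n1 /n2; ring.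
have [G|G] : (forall x, 0 <= phi u (Some x) - phi w (Some x)) \/
             (forall x, phi u (Some x) - phi w (Some x) <= 0).
  have [bp|bn|b0] := ltgtP nb 0.
  - right => x; rewrite Eg.
    have E : nb * (na + nb * dot x x - 2 * (x.1 * n1 + x.2 * n2)) =
       (nb * x.1 - n1) ^+ 2 + (nb * x.2 - n2) ^+ 2.
      apply/eqP; rewrite -subr_eq0; apply/eqP.
      by rewrite /dot; transitivity (-(n1 * n1 + n2 * n2 - na * nb)); [ring | rewrite null oppr0].
    have : 0 <= nb * (na + nb * dot x x - 2 * (x.1 * n1 + x.2 * n2)).
      by rewrite E; apply: addr_ge0; apply: sqr_ge0.
    by rewrite nmulr_rge0.
  - left => x; rewrite Eg.
    have E : nb * (na + nb * dot x x - 2 * (x.1 * n1 + x.2 * n2)) =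
       (nb * x.1 - n1) ^+ 2 + (nb * x.2 - n2) ^+ 2.
      apply/eqP; rewrite -subr_eq0; apply/eqP.
      by rewrite /dot; transitivity (-(n1 * n1 + n2 * n2 - na * nb)); [ring | rewrite null oppr0].
    have : 0 <= nb * (na + nb * dot x x - 2 * (x.1 * n1 + x.2 * n2)).
      by rewrite E; apply: addr_ge0; apply: sqr_ge0.
    by rewrite pmulr_rge0.
  - rewrite b0 mulr0 subr0 in null.
    have e1 : n1 = 0 by nra.
    have e2 : n2 = 0 by nra.
    have [ap|an] := leP 0 na.
    + by left => x; rewrite Eg b0 e1 e2; lra.
    + by right => x; rewrite Eg b0 e1 e2; lra.
- have [x Hx] := int_nonempty Hu; exists x; split => //.
  have := G x; lra.
- have [x Hx] := int_nonempty Hw; exists x; split => //.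
  have := G x; lra.
Qed.

Definition Mf (R : realType) : 'M[R]_4 := \matrix_(k, l)
  nth 0 (nth [::] [:: [:: 0; -1/2; 0; 0]; [:: -1/2; 0; 0; 0];
                      [:: 0; 0; 1; 0]; [:: 0; 0; 0; 1]] k) l.

Definition nv (R : realType) (p : ept R) : 'rV[R]_4 := \row_k
  nth 0 (match p with Some x => [:: -2 * dot x x; -2; -2 * x.1; -2 * x.2]
                    | None => [:: -2; 0; 0; 0] end) k.

Lemma mxB (R : realType) m n (A : 'M[R]_(m, 4)) (C : 'M[R]_(n, 4)) i j :
  (A *m Mf R *m C^T) i j = B (row i A) (row j C).
Proof.
rewrite !mxE sum4 !mxE !sum4 !mxE /B /wa /wb /wx /wy !mxE /=.
by field.
Qed.

Lemma phi_nv (R : realType) (w : 'rV[R]_4) p : phi w p = B w (nv p).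
Proof.
rewrite /phi /B /wa /wb /wx /wy !mxE /=; case: p => [x|] /=; rewrite /dot; by field.
Qed.

Lemma nv_null (R : realType) (p : ept R) : B (nv p) (nv p) = 0.
Proof.
rewrite /B /wa /wb /wx /wy !mxE /=; case: p => [x|] /=; rewrite /dot; by field.
Qed.

Lemma MfT (R : realType) : (Mf R)^T = Mf R.
Proof.
apply/matrixP => i j; rewrite !mxE.
by have [->|[->|[->|->]]] := ord4 i; have [->|[->|[->|->]]] := ord4 j.
Qed.

Definition Gm (R : realType) : 'M[R]_4 := \matrix_(i, j) (if i == j then 1 else -1).
Definition Hm (R : realType) : 'M[R]_4 := \matrix_(i, j) (if i == j then 1/4 else -1/4).

Lemma GH (R : realType) : Gm R *m Hm R = 1%:M.
Proof.
apply/matrixP => i j; rewrite !mxE sum4 !mxE.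
have [->|[->|[->|->]]] := ord4 i; have [->|[->|[->|->]]] := ord4 j; rewrite /=; by field.
Qed.

Lemma row_rv (R : realType) (v : 'rV[R]_4) : row 0 v = v.
Proof. by apply/rowP => k; rewrite mxE. Qed.

Lemma key (R : realType) (W : 'M[R]_4) :
  (forall i j, B (row i W) (row j W) = if i == j then 1 else -1) ->
  forall p, 2 * \sum_i phi (row i W) p ^+ 2 = (\sum_i phi (row i W) p) ^+ 2.
Proof.
move=> HB p.
have HG : W *m Mf R *m W^T = Gm R.
  by apply/matrixP => i j; rewrite mxB HB mxE.
have h1 : W *m (Mf R *m W^T *m Hm R) = 1%:M.
  by rewrite !mulmxA HG GH.
have h2 := mulmx1C h1.
have h3 : (W^T *m Hm R *m W) *m Mf R = 1%:M.
  by apply: mulmx1C; rewrite !mulmxA.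
have h4 : forall X : 'M[R]_(4, 1), W^T *m (Hm R *m (W *m (Mf R *m X))) = X.
  by move=> X; rewrite !mulmxA h3 mul1mx.
pose f i := phi (row i W) p.
pose Phi : 'M[R]_(4, 1) := \col_i f i.
have EPhi : W *m Mf R *m (nv p)^T = Phi.
  by apply/matrixP => i j; rewrite mxB !mxE (ord1 j) row_rv -phi_nv.
have Q : (Phi^T *m Hm R *m Phi) 0 0 = 0.
  rewrite -EPhi !trmx_mul trmxK MfT -!mulmxA h4 !mulmxA mxB row_rv.
  exact: nv_null.
move: Q; rewrite !mxE sum4 !mxE !sum4 !mxE /= -/(f o0) -/(f o1) -/(f o2) -/(f o3).
move=> Q; nra.
Qed.

Definition distinct4 (i j k l : 'I_4) :=
  [&& i != j, i != k, i != l, j != k, j != l & k != l].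

Ltac ord4_cases i := have [->|[->|[->|->]]] := ord4 i.

Lemma compl2 (i j : 'I_4) : i != j -> exists k l, distinct4 i j k l.
Proof.
ord4_cases i; ord4_cases j => // _.
all: first [ by exists o2, o3 | by exists o1, o3 | by exists o1, o2
           | by exists o0, o3 | by exists o0, o2 | by exists o0, o1 ].
Qed.

Lemma compl3 (i k l : 'I_4) : i != k -> i != l -> k != l -> exists j, distinct4 i j k l.
Proof.
ord4_cases i; ord4_cases k => //; ord4_cases l => // _ _ _.
all: first [ by exists o0 | by exists o1 | by exists o2 | by exists o3 ].
Qed.

Lemma sum_perm (R : realType) (F : 'I_4 -> R) i j k l :
  distinct4 i j k l -> \sum_m F m = F i + F j + F k + F l.
Proof.
rewrite sum4; ord4_cases i; ord4_cases j => //; ord4_cases k => //; ord4_cases l => // _.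
all: ring.
Qed.

Definition Erel (R : realType) (f : 'I_4 -> R) :=
  2 * \sum_i f i ^+ 2 = (\sum_i f i) ^+ 2.

Definition dual (R : realType) (f : 'I_4 -> R) : 'I_4 -> R :=
  fun i => (\sum_j f j) / 2 - f i.

Lemma dual_sum (R : realType) (f : 'I_4 -> R) : \sum_i dual f i = \sum_i f i.
Proof. rewrite /dual !sum4; by field. Qed.

Lemma dual_dual (R : realType) (f : 'I_4 -> R) i : dual (dual f) i = f i.
Proof. rewrite {1}/dual dual_sum /dual; by field. Qed.

Lemma E_dual (R : realType) (f : 'I_4 -> R) : Erel f -> Erel (dual f).
Proof.
rewrite /Erel dual_sum /dual !sum4 => H.
have -> : ((f o0 + f o1 + f o2 + f o3) / 2 - f o0) ^+ 2 +
  ((f o0 + f o1 + f o2 + f o3) / 2 - f o1) ^+ 2 +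
  ((f o0 + f o1 + f o2 + f o3) / 2 - f o2) ^+ 2 +
  ((f o0 + f o1 + f o2 + f o3) / 2 - f o3) ^+ 2 =
  f o0 ^+ 2 + f o1 ^+ 2 + f o2 ^+ 2 + f o3 ^+ 2 by field=> //.
exact: H.
Qed.

Lemma E_opp (R : realType) (f : 'I_4 -> R) : Erel f -> Erel (fun i => - f i).
Proof.
rewrite /Erel !sum4 => H.
have -> : (- f o0) ^+ 2 + (- f o1) ^+ 2 + (- f o2) ^+ 2 + (- f o3) ^+ 2 =
  f o0 ^+ 2 + f o1 ^+ 2 + f o2 ^+ 2 + f o3 ^+ 2 by ring.
rewrite H; ring.
Qed.

Lemma dual_opp (R : realType) (f : 'I_4 -> R) i : dual (fun i => - f i) i = - dual f i.
Proof. rewrite /dual !sum4; by field. Qed.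

Lemma R3 (R : realType) (f : 'I_4 -> R) i k l :
  Erel f -> f k = 0 -> f l = 0 -> i != k -> i != l -> k != l -> dual f i = 0.
Proof.
move=> E fk fl ik il kl.
have [j D] := compl3 ik il kl.
move: E; rewrite /Erel /dual (sum_perm f D) (sum_perm (fun m => f m ^+ 2) D) fk fl.
move=> E; nra.
Qed.

Lemma R_all (R : realType) (f : 'I_4 -> R) i :
  Erel f -> \sum_j f j = 0 -> f i = 0.
Proof.
rewrite /Erel => E S; rewrite S sum4 expr0n /= in E.
have E' : f o0 ^+ 2 + f o1 ^+ 2 + f o2 ^+ 2 + f o3 ^+ 2 = 0 by lra.
ord4_cases i; nra.
Qed.

Lemma core (R : realType) (u v w t : R) :
  2 * (u ^+ 2 + v ^+ 2 + w ^+ 2 + t ^+ 2) = (u + v + w + t) ^+ 2 ->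
  0 <= u -> 0 <= v -> 0 <= w -> t + w < 0 -> False.
Proof.
move=> E hu hv hw htw.
have h1 : (u + v + w - t) ^+ 2 = 4 * (u * v + v * w + w * u) by nra.
have hs : 0 <= u + v + 2 * w by lra.
have hlt : u + v + 2 * w < u + v + w - t by lra.
have h2 : (u + v + 2 * w) ^+ 2 < (u + v + w - t) ^+ 2.
  by rewrite -subr_gt0 subr_sqr; apply: mulr_gt0; lra.
have h3 : 0 <= (u - v) ^+ 2 + 4 * w ^+ 2 by apply: addr_ge0; [apply: sqr_ge0 | nra].
nra.
Qed.

Lemma R_disj4 (R : realType) (a b c d : R) :
  2 * (a ^+ 2 + b ^+ 2 + c ^+ 2 + d ^+ 2) = (a + b + c + d) ^+ 2 ->
  ~ (a < 0 /\ b < 0) -> ~ (a < 0 /\ c < 0) -> ~ (a < 0 /\ d < 0) ->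
  ~ (b < 0 /\ c < 0) -> ~ (b < 0 /\ d < 0) -> ~ (c < 0 /\ d < 0) ->
  (a + b + c + d) / 2 - a < 0 -> (a + b + c + d) / 2 - b < 0 -> False.
Proof.
move=> E nab nac nad nbc nbd ncd ha hb.
have hcd : c + d < 0 by lra.
have [hc|hc] := ltP c 0.
- have a0 : 0 <= a by rewrite leNgt; apply/negP => h; apply: nac; split.
  have b0 : 0 <= b by rewrite leNgt; apply/negP => h; apply: nbc; split.
  have d0 : 0 <= d by rewrite leNgt; apply/negP => h; apply: ncd; split.
  by apply: (core (u:=a) (v:=b) (w:=d) (t:=c)); [nra | done | done | done | lra].
- have hd : d < 0 by lra.
  have a0 : 0 <= a by rewrite leNgt; apply/negP => h; apply: nad; split.
  have b0 : 0 <= b by rewrite leNgt; apply/negP => h; apply: nbd; split.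
  by apply: (core (u:=a) (v:=b) (w:=c) (t:=d)); [nra | done | done | done | lra].
Qed.

Lemma R_disj (R : realType) (f : 'I_4 -> R) :
  Erel f -> (forall i j, i != j -> ~ (f i < 0 /\ f j < 0)) ->
  forall i j, i != j -> ~ (dual f i < 0 /\ dual f j < 0).
Proof.
move=> E H i j ij [hi hj].
have [k [l D]] := compl2 ij.
have D' := D; move: D' => /and5P [d1 d2 d3 d4 /andP [d5 d6]].
move: E hi hj; rewrite /Erel /dual (sum_perm f D) (sum_perm (fun m => f m ^+ 2) D) => E hi hj.
apply: (R_disj4 E _ _ _ _ _ _ hi hj); apply: H => //; by rewrite eq_sym.
Qed.

Lemma R_disj_pos (R : realType) (f : 'I_4 -> R) :
  Erel f -> (forall i j, i != j -> ~ (0 < f i /\ 0 < f j)) ->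
  forall i j, i != j -> ~ (0 < dual f i /\ 0 < dual f j).
Proof.
move=> E H i j ij [hi hj].
apply: (R_disj (E_opp E) _ ij).
- move=> a b ab [ha hb]; apply: (H a b ab); split; lra.
- by rewrite !dual_opp; split; lra.
Qed.

Lemma O_lemma (R : realType) (C C' : ocircle R) p :
  valid C -> valid C' -> on C p -> on C' p -> B (wvec C) (wvec C') = 0 ->
  ortho_at C C' p.
Proof.
move=> V V' H H' HB; split => //; split => //.
move: HB; rewrite /B; have [-> [-> [-> ->]]] := wvecE C; have [-> [-> [-> ->]]] := wvecE C'.
case: C V H => [c r|h m]; case: C' V' H' => [c' r'|h' m'] /= V' H' V H;
  case: p H H' => [x|] //= H H' HB.
- have r0 : r != 0 by apply/eqP.
  have r0' : r' != 0 by apply/eqP.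
  have num : r ^+ 2 + r' ^+ 2 - dot (sub c c') (sub c c') = 0.
    have -> : r ^+ 2 + r' ^+ 2 - dot (sub c c') (sub c c') =
      (c.1 / r * (c'.1 / r') + c.2 / r * (c'.2 / r') -
       ((dot c c - r ^+ 2) / r * (1 / r') + 1 / r * ((dot c' c' - r' ^+ 2) / r')) / 2) * (2 * r * r').
      by rewrite /dot /sub /=; field; rewrite r0 r0'.
    by rewrite HB mul0r.
  have -> : dot (sub x c) (sub x c') =
    (dot (sub x c) (sub x c) + dot (sub x c') (sub x c') - dot (sub c c') (sub c c')) / 2.
    by rewrite /dot /sub /=; field.
  by rewrite H H' num mul0r.
- have r0 : r != 0 by apply/eqP.
  have e : dot c h' = m'.
    have : c.1 / r * h'.1 + c.2 / r * h'.2 - ((dot c c - r ^+ 2) / r * 0 + 1 / r * (2 * m')) / 2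
       = (dot c h' - m') / r by rewrite /dot; field.
    rewrite HB => /esym /eqP; rewrite mulf_eq0 invr_eq0 (negbTE r0) orbF subr_eq0.
    by move/eqP.
  have -> : dot (sub x c) h' = dot x h' - dot c h' by rewrite /dot /sub /=; ring.
  by rewrite e H' subrr.
- have r0' : r' != 0 by apply/eqP.
  have e : dot c' h = m.
    have : h.1 * (c'.1 / r') + h.2 * (c'.2 / r') - (2 * m * (1 / r') + 0 * ((dot c' c' - r' ^+ 2) / r')) / 2
       = (dot c' h - m) / r' by rewrite /dot; field.
    rewrite HB => /esym /eqP; rewrite mulf_eq0 invr_eq0 (negbTE r0') orbF subr_eq0.
    by move/eqP.
  have -> : dot h (sub x c') = dot x h - dot c' h by rewrite /dot /sub /=; ring.
  by rewrite e H subrr.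
- by rewrite -HB /dot; field.
- by rewrite -HB /dot; field.
Qed.

Definition circ_of (R : realType) (w : 'rV[R]_4) : ocircle R :=
  if wb w == 0 then OLine (wx w, wy w) (wa w / 2)
  else OCirc (wx w / wb w, wy w / wb w) (1 / wb w).

Lemma circ_ofK (R : realType) (w : 'rV[R]_4) :
  B w w = 1 -> wvec (circ_of w) = w /\ valid (circ_of w).
Proof.
rewrite /B /circ_of => Hw; case: eqP => b0.
- rewrite b0 in Hw; split.
  + apply/rowP => k; ord4_cases k; rewrite !mxE /=.
    * by rewrite /wa; field.
    * by rewrite -b0.
    * by [].
    * by [].
  + rewrite /= /dot /=; lra.
- have bn : wb w != 0 by apply/eqP.
  split.
  + apply/rowP => k; ord4_cases k; rewrite !mxE /=.
    * have -> : ((wx w / wb w) * (wx w / wb w) + (wy w / wb w) * (wy w / wb w) - (1 / wb w) ^+ 2)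
          / (1 / wb w) = (wx w * wx w + wy w * wy w - 1) / wb w by field.
      have -> : wx w * wx w + wy w * wy w - 1 = wa w * wb w by lra.
      by rewrite /wa; field.
    * by rewrite /wb; field.
    * by rewrite /wx; field.
    * by rewrite /wy; field.
  + by rewrite /= div1r; apply/eqP; rewrite invr_eq0.
Qed.

Lemma Dmx_entry (R : realType) (W : 'M[R]_4) i l :
  (Dmx R *m W) i l = (\sum_j W j l) / 2 - W i l.
Proof.
rewrite mxE !sum4 !mxE.
by ord4_cases i; rewrite /=; field.
Qed.

Lemma row_entry (R : realType) (A : 'M[R]_4) i l : row i A 0 l = A i l.
Proof. by rewrite mxE. Qed.

Lemma phi_dual (R : realType) (W : 'M[R]_4) i p :
  phi (row i (Dmx R *m W)) p = dual (fun j => phi (row j W) p) i.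
Proof.
rewrite /dual /phi /wa /wb /wx /wy !row_entry !Dmx_entry !sum4 !row_entry.
by case: p => [x|]; field.
Qed.

Lemma B_dual_r (R : realType) (u : 'rV[R]_4) (W : 'M[R]_4) j :
  B u (row j (Dmx R *m W)) = (\sum_k B u (row k W)) / 2 - B u (row j W).
Proof.
rewrite /B /wa /wb /wx /wy !row_entry !Dmx_entry !sum4 !row_entry.
by field.
Qed.

Lemma gram_sum (R : realType) (i : 'I_4) :
  \sum_k (if i == k then 1 else -1 : R) = -2.
Proof. by rewrite sum4; ord4_cases i; rewrite /=; field. Qed.

Lemma AutD (R : realType) : AutQD (Dmx R).
Proof.
rewrite /AutQD /QD; apply/matrixP => i j.
rewrite !mxE !sum4 !mxE !sum4 !mxE.
by ord4_cases i; ord4_cases j; rewrite /=; field.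
Qed.

Lemma row_Wmx (R : realType) (D : config R) i : row i (Wmx D) = wvec (D i).
Proof. by apply/rowP => k; rewrite !mxE. Qed.

Lemma B_rev (R : realType) (C C' : ocircle R) :
  B (wvec (reverse C)) (wvec (reverse C')) = B (wvec C) (wvec C').
Proof.
rewrite /B; have [-> [-> [-> ->]]] := wvecE (reverse C).
have [-> [-> [-> ->]]] := wvecE (reverse C').
have [-> [-> [-> ->]]] := wvecE C; have [-> [-> [-> ->]]] := wvecE C'.
case: C => [c r|h m]; case: C' => [c' r'|h' m'] /=; rewrite ?invrN ?mulrN ?mulNr ?sqrrN; ring.
Qed.

Lemma d4swap (i j k l : 'I_4) : distinct4 i j k l -> distinct4 k l i j.
Proof. by ord4_cases i; ord4_cases j; ord4_cases k; ord4_cases l. Qed.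

Unset Implicit Arguments.

Theorem mainTheorem4 (R : realType) (D : config R) :
  oriented_descartes D ->
  AutQD (Dmx R) /\
  exists Dp : config R,
    [/\ oriented_descartes Dp,
        Dmx R *m Wmx D = Wmx Dp,
        (forall (i j k : 'I_4) (p : ept R),
            j != k -> tangent_at (D j) (D k) p -> ~ on (D i) p -> on (Dp i) p),
        (forall p : ept R, tangency_point D p <-> tangency_point Dp p)
      & (forall (i j : 'I_4) (p : ept R), tangency_point D p ->
            on (D i) p -> on (Dp j) p -> ortho_at (D i) (Dp j) p)].
Proof.
move=> [[Vd [Tan Dist]] Or].
split; first exact: AutD.
have CT : forall i j p, i != j -> on (D i) p -> on (D j) p -> tangent_at (D i) (D j) p.
  move=> i j p ij hi hj; have [p' Tp'] := Tan i j ij.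
  have -> : p = p' by apply/(Tp' p).
  exact: Tp'.
have NA : forall p, ~ (forall m, on (D m) p).
  move=> p H.
  have T01 := CT o0 o1 p isT (H o0) (H o1).
  have T23 := CT o2 o3 p isT (H o2) (H o3).
  by have := Dist o0 o1 o2 o3 p isT isT T01 T23.
have HB : forall i j, B (row i (Wmx D)) (row j (Wmx D)) = if i == j then 1 else -1.
  move=> i j; rewrite !row_Wmx; case: eqP => [<-|/eqP ij]; first exact: B_self.
  have [p Tp] := Tan i j ij.
  have := T_all (Vd i) (Vd j) Tp; move/eqP; rewrite sqrf_eq1 => /orP [/eqP B1|/eqP //].
  exfalso.
  case: Or => [Dj|Dj].
  - have [x [h1 h2]] := S_lemma (B_self (Vd i)) (B_self (Vd j)) B1.
    by apply: (Dj i j ij x); split; apply/int_phi.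
  - have [x [h1 h2]] := S_lemma (B_self (valid_rev (Vd i))) (B_self (valid_rev (Vd j)))
       (etrans (B_rev _ _) B1).
    by apply: (Dj i j ij x); split; apply/int_phi => //; apply: valid_rev.
pose W' := Dmx R *m Wmx D.
pose Dp : config R := fun i => circ_of (row i W').
have HBd : forall i, B (row i W') (row i W') = 1.
  move=> i.
  have G1 : forall k, B (row k (Wmx D)) (row i W') = -1 - (if k == i then 1 else -1).
    move=> k; rewrite B_dual_r.
    under eq_bigr => m _ do rewrite HB.
    by rewrite gram_sum HB; field.
  rewrite B_dual_r.
  under eq_bigr => k _ do rewrite B_sym G1.
  rewrite B_sym G1 eqxx sum4.
  by ord4_cases i; rewrite /=; field.
have CK : forall i, wvec (Dp i) = row i W' /\ valid (Dp i) := fun i => circ_ofK (HBd i).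
have WW : Dmx R *m Wmx D = Wmx Dp.
  by apply/matrixP => k l; rewrite [RHS]mxE (CK k).1 row_entry.
pose F p j := phi (row j (Wmx D)) p.
have EF : forall p, Erel (F p) by move=> p; exact: key HB p.
have onD : forall j p, on (D j) p <-> F p j = 0.
  by move=> j p; rewrite /F row_Wmx; exact: on_phi (Vd j).
have Fp : forall p j, phi (wvec (Dp j)) p = dual (F p) j.
  by move=> p j; rewrite (CK j).1 phi_dual.
have onDp : forall j p, on (Dp j) p <-> dual (F p) j = 0.
  by move=> j p; rewrite -Fp; exact: on_phi (CK j).2.
have TP : forall i j k l p, distinct4 i j k l -> tangent_at (D k) (D l) p ->
    tangent_at (Dp i) (Dp j) p.
  move=> i j k l p Dd Tp q; move: (Dd) => /and5P [ij ik il jk /andP [jl kl]].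
  split.
  - move=> [/onDp hi /onDp hj]; apply/(Tp q); split; apply/onD.
    + rewrite -dual_dual; apply: (R3 (E_dual (EF q)) hi hj) => //; by rewrite eq_sym.
    + rewrite -dual_dual; apply: (R3 (E_dual (EF q)) hi hj) => //; by rewrite eq_sym.
  - move=> ->; have [hk hl] := (Tp p).2 erefl; move/onD: hk => hk; move/onD: hl => hl.
    by split; apply/onDp; apply: (R3 (EF p) hk hl).
have NO3 : forall a b c p, a != b -> a != c -> b != c ->
    on (Dp a) p -> on (Dp b) p -> on (Dp c) p -> False.
  move=> a b c p ab ac bc /onDp ha /onDp hb /onDp hc.
  have Fc : F p c = 0.
    rewrite -dual_dual; apply: (R3 (E_dual (EF p)) ha hb) => //; by rewrite eq_sym.
  have S0 : \sum_j F p j = 0.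
    by move: hc; rewrite /dual Fc subr0 => /eqP; rewrite mulf_eq0 invr_eq0 pnatr_eq0 orbF => /eqP.
  by apply: (NA p) => m; apply/onD; exact: R_all (EF p) S0.
exists Dp; split.
- split; last first.
  + case: Or => [Dj|Dj]; [left|right] => i j ij x [hi hj].
    * move/(int_phi _ (CK i).2): hi; move/(int_phi _ (CK j).2): hj; rewrite !Fp => hj hi.
      apply: (R_disj (EF (Some x)) _ ij (conj hi hj)).
      move=> a b ab [ha hb]; apply: (Dj a b ab x).
      by split; apply/int_phi => //; rewrite -row_Wmx.
    * move/(int_phi _ (valid_rev (CK i).2)): hi; move/(int_phi _ (valid_rev (CK j).2)): hj.
      rewrite !phi_rev !Fp !oppr_lt0 => hj hi.
      apply: (R_disj_pos (EF (Some x)) _ ij (conj hi hj)).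
      move=> a b ab [ha hb]; apply: (Dj a b ab x).
      split; apply/int_phi; try apply: valid_rev => //; rewrite phi_rev oppr_lt0 -row_Wmx //.
  + split; first by move=> i; exact: (CK i).2.
    split.
    * move=> i j ij; have [k [l Dd]] := compl2 ij.
      move: (Dd) => /and5P [_ _ _ _ /andP [_ kl]].
      have [p Tp] := Tan k l kl; exists p; exact: TP Dd Tp.
    * move=> i j k l p ij kl Ti Tk.
      have [hi hj] := (Ti p).2 erefl; have [hk hl] := (Tk p).2 erefl.
      case: (eqVneq i k) => [ik|ik].
      - subst k; case: (eqVneq j l) => [->|jl]; first by rewrite ?eqxx.
        by exfalso; exact: (NO3 i j l p ij kl jl hi hj hl).
      - case: (eqVneq i l) => [il|il].
        + subst l; case: (eqVneq j k) => [->|jk]; first by rewrite ?eqxx ?orbT.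
          by exfalso; apply: (NO3 i j k p ij ik jk hi hj hk).
        + by exfalso; exact: (NO3 i k l p ik il kl hi hk hl).
- exact: WW.
- move=> i j k p jk Tp ni; have [hj hk] := (Tp p).2 erefl.
  have ij : i != j by apply/eqP => e; apply: ni; rewrite e.
  have ik : i != k by apply/eqP => e; apply: ni; rewrite e.
  apply/onDp; move/onD: hj => hj; move/onD: hk => hk.
  exact: (R3 (EF p) hj hk ij ik jk).
- move=> p; split.
  + move=> [i [j [ij Ti]]]; have [k [l Dd]] := compl2 ij.
    move: (Dd) => /and5P [_ _ _ _ /andP [_ kl]].
    by exists k, l; split => //; apply: (TP k l i j p (d4swap Dd) Ti).
  + move=> [i [j [ij Ti]]]; have [k [l Dd]] := compl2 ij.
    move: (Dd) => /and5P [_ _ _ _ /andP [_ kl]].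
    have [p0 T0] := Tan k l kl.
    have T0' := TP i j k l p0 Dd T0.
    have -> : p = p0 by symmetry; apply/(Ti p0); exact: (T0' p0).2.
    by exists k, l.
- move=> i j p _ hi hj.
  have ij : i != j.
    apply/eqP => e; subst j.
    move/onD: (hi) => hi'; move/onDp: (hj) => hj'.
    have S0 : \sum_m F p m = 0.
      by move: hj'; rewrite /dual hi' subr0 => /eqP; rewrite mulf_eq0 invr_eq0 pnatr_eq0 orbF => /eqP.
    by apply: (NA p) => m; apply/onD; exact: R_all (EF p) S0.
  apply: O_lemma (Vd i) (CK j).2 hi hj _.
  rewrite (CK j).1 -row_Wmx B_dual_r.
  under eq_bigr => m _ do rewrite HB.
  by rewrite gram_sum HB (negbTE ij); field.
Qed.
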